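(* Consider the perturbed federated algorithm described in the context, with $\beta\in(0,1)$. Assume that the bounded variance, bounded stochastic gradient norm and $L$-smoothness assumptions hold. Then for every client $i$, round $t\ge0$ and step $k\in\{0,\dots,E-1\}$, $$\mathbb{E}\|\overline{\mathbf{w}}_{t,k}-\widetilde{\mathbf{w}}^i_{t,k}\|^2\le4\gamma_t^2E^2G^2\Big[4+(1-\beta)^2+\mathbb{1}_{t\ge1}\frac{8\gamma_{t-1}^2}{\gamma_t^2}\Big(1-\frac1\beta\Big)^2\Big].$$
   Context: Setting: there are $C$ clients with local objectives $F_i:\mathbb{R}^D\to\mathbb{R}$. Similarity weights $p_{in}\ge0$ are symmetric, satisfy $p_{ii}=0$, and $\sum_{i,n}p_{in}=1$. Let $p_i=\sum_np_{in}>0$. Algorithm, with parameter $\beta$, $E\ge1$ local steps and step sizes $\gamma_t$, all clients participating: - $\mathbf{u}^i_0=\overline{\mathbf{w}}_{0,0}$. - In round $t$, $\mathbf{w}^i_{t,0}=\overline{\mathbf{w}}_{t,0}$. For $k=0,\dots,E-1$, $\widetilde{\mathbf{w}}^i_{t,k}=\beta\mathbf{w}^i_{t,k}+(1-\beta)\mathbf{u}^i_t$ and $\mathbf{w}^i_{t,k+1}=\mathbf{w}^i_{t,k}-\gamma_tg_i(\widetilde{\mathbf{w}}^i_{t,k})$, with stochastic gradients $g_i$ of $F_i$ sampled independently given the past. - $\overline{\mathbf{w}}_{t,k}=\sum_ip_i\mathbf{w}^i_{t,k}$ and $\overline{\mathbf{w}}_{t+1,0}=\overline{\mathbf{w}}_{t,E}$.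 - For $t\ge1$, $\mathbf{u}^i_t=\frac1{p_i}\sum_np_{in}\mathbf{w}^n_{t-1,E}$. Assumptions: - Unbiasedness: $\mathbb{E}\,g_i(\widetilde{\mathbf{w}}^i_{t,k})=\nabla F_i(\widetilde{\mathbf{w}}^i_{t,k})$. - Variance: $\mathbb{E}\|g_i(\widetilde{\mathbf{w}}^i_{t,k})-\nabla F_i(\widetilde{\mathbf{w}}^i_{t,k})\|^2\le\sigma^2$. - Bounded second moment: $\mathbb{E}\|g_i(\widetilde{\mathbf{w}}^i_{t,k})\|^2\le G^2$. - Each $\nabla F_i$ is $L$-Lipschitz. $\mathbb{E}$ is total expectation. *)

(* Defs.v *)
From HB Require Import structures.
From mathcomp Require Import all_boot all_order all_algebra.
From mathcomp Require Import all_classical all_reals all_analysis.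
Set Implicit Arguments. Unset Strict Implicit. Unset Printing Implicit Defensive.
Import Order.TTheory GRing.Theory Num.Theory.
Import numFieldNormedType.Exports.
Local Open Scope ring_scope.

Section Alg.
Variables (R : realType) (D C : nat).
Local Notation vec := 'rV[R]_D.

Definition dotv (x y : vec) : R := \sum_(j < D) x ord0 j * y ord0 j.
Definition norm2 (x : vec) : R := dotv x x.
Definition enorm (x : vec) : R := Num.sqrt (norm2 x).

(* parameters of the algorithm:
   p : pairwise similarity weights p_{in};
   beta, E (local steps), gamma (step sizes), w0 = \bar w_{0,0};
   gr i t k w : the stochastic gradient returned to client i at round t,
   local step k, when queried at point w (for a fixed sample point). *)
Variables (p : 'I_C -> 'I_C -> R) (beta : R) (E : nat) (gamma : nat -> R)
  (w0 : vec) (gr : 'I_C -> nat -> nat -> vec -> vec).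

Definition pw (i : 'I_C) : R := \sum_(n < C) p i n.

(* \bar w_{t,0} given the final local iterates of round t-1 (None if t = 0) *)
Definition start_of (prev : option ('I_C -> vec)) : vec :=
  match prev with
  | None => w0
  | Some f => \sum_(i < C) pw i *: f i
  end.

(* u^i_t given the final local iterates of round t-1 (None if t = 0) *)
Definition u_of (prev : option ('I_C -> vec)) (i : 'I_C) : vec :=
  match prev with
  | None => w0
  | Some f => (pw i)^-1 *: \sum_(n < C) p i n *: f n
  end.

(* local iterate w^i_{t,k}, from start point s = \bar w_{t,0} and u = u^i_t *)
Fixpoint local (t : nat) (s u : vec) (i : 'I_C) (k : nat) : vec :=
  match k with
  | 0 => s
  | k'.+1 =>
      let w := local t s u i k' in
      w - gamma t *: gr i t k' (beta *: w + (1 - beta) *: u)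
  end.

Fixpoint final (t : nat) : 'I_C -> vec :=
  let prev := match t with 0 => None | t'.+1 => Some (final t') end in
  fun i => local t (start_of prev) (u_of prev i) i E.

Definition prev_round (t : nat) : option ('I_C -> vec) :=
  match t with 0 => None | t'.+1 => Some (final t') end.

Definition u_it (t : nat) (i : 'I_C) : vec := u_of (prev_round t) i.
Definition w_loc (t k : nat) (i : 'I_C) : vec :=
  local t (start_of (prev_round t)) (u_it t i) i k.
Definition w_bar (t k : nat) : vec := \sum_(i < C) pw i *: w_loc t k i.
Definition w_til (t k : nat) (i : 'I_C) : vec :=
  beta *: w_loc t k i + (1 - beta) *: u_it t i.

End Alg.

(* Main.v *)
Require Import Defs.
From HB Require Import structures.
From mathcomp Require Import all_boot all_order all_algebra.
From mathcomp Require Import all_classical all_reals all_analysis.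
From mathcomp Require Import measurable_realfun ring lra.
Import Order.TTheory GRing.Theory Num.Theory.
Import numFieldNormedType.Exports.
Local Open Scope ring_scope.


Lemma cs_scalar (R : realType) (I : finType) (c y : I -> R) :
  (\sum_a c a * y a) ^+ 2 <= (\sum_a `|c a|) * \sum_a `|c a| * y a ^+ 2.
Proof.
have e1 : (\sum_a c a * y a) ^+ 2 = \sum_a \sum_b (c a * y a) * (c b * y b).
  by rewrite expr2 big_distrl; apply: eq_bigr => a _; rewrite big_distrr.
have e2 : (\sum_a `|c a|) * \sum_a `|c a| * y a ^+ 2
    = \sum_a \sum_b `|c a| * (`|c b| * y b ^+ 2).
  by rewrite big_distrl; apply: eq_bigr => a _; rewrite big_distrr.
have e3 : (\sum_a `|c a|) * \sum_a `|c a| * y a ^+ 2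
    = \sum_a \sum_b `|c b| * (`|c a| * y a ^+ 2).
  by rewrite e2 exchange_big.
rewrite e1.
suff : 2 * \sum_a \sum_b (c a * y a) * (c b * y b) <=
  (\sum_a `|c a|) * \sum_a `|c a| * y a ^+ 2 + (\sum_a `|c a|) * \sum_a `|c a| * y a ^+ 2.
  by move=> h; lra.
rewrite {1}e2 e3 -big_split /= mulr_sumr; apply: ler_sum => a _.
rewrite -big_split /= mulr_sumr; apply: ler_sum => b _.
have h1 : c a * y a * (c b * y b) <= `|c a| * `|y a| * (`|c b| * `|y b|).
  by rewrite -!normrM; apply: ler_norm.
have ua := normr_ge0 (c a); have ub := normr_ge0 (c b).
have h2 : 0 <= `|c a| * `|c b| * (`|y a| - `|y b|) ^+ 2.
  by apply: mulr_ge0; [apply: mulr_ge0 | apply: sqr_ge0].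
rewrite -(real_normK (num_real (y a))) -(real_normK (num_real (y b))).
nra.
Qed.

Set Implicit Arguments. Unset Strict Implicit.


Lemma norm2_ge0 (R : realType) (D : nat) (x : 'rV[R]_D) : 0 <= norm2 x.
Proof. by apply: sumr_ge0 => j _; rewrite -expr2 sqr_ge0. Qed.

Lemma cs_vec (R : realType) (D : nat) (I : finType) (c : I -> R) (x : I -> 'rV[R]_D) :
  norm2 (\sum_a c a *: x a) <= (\sum_a `|c a|) * \sum_a `|c a| * norm2 (x a).
Proof.
rewrite /norm2 /dotv.
have -> : \sum_a `|c a| * (\sum_(j < D) x a ord0 j * x a ord0 j)
   = \sum_(j < D) \sum_a `|c a| * (x a ord0 j) ^+ 2.
  rewrite exchange_big /=; apply: eq_bigr => a _; rewrite mulr_sumr.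
  by apply: eq_bigr => j _; rewrite expr2.
rewrite mulr_sumr; apply: ler_sum => j _.
have -> : (\sum_a c a *: x a) ord0 j = \sum_a c a * x a ord0 j.
  by rewrite summxE; apply: eq_bigr => a _; rewrite mxE.
by rewrite -expr2; apply: cs_scalar.
Qed.

Section Good.
Variables (R : realType) (D : nat) (d : measure_display) (Omega : measurableType d)
  (P : probability Omega R).

Definition cmeas (f : Omega -> 'rV[R]_D) :=
  forall j, measurable_fun setT (fun w => f w ord0 j).
Definition good (f : Omega -> 'rV[R]_D) (M : R) :=
  cmeas f /\ (\int[P]_w (norm2 (f w))%:E <= M%:E)%E.

Lemma meas_norm2 f : cmeas f -> measurable_fun setT (fun w => norm2 (f w)).
Proof.
move=> H; rewrite /norm2 /dotv; apply: measurable_sum => j.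
exact: (measurable_funM (H j) (H j)).
Qed.

Lemma cmeas_sum (I : finType) (c : I -> R) (f : I -> Omega -> 'rV[R]_D) :
  (forall a, cmeas (f a)) -> cmeas (fun w => \sum_a c a *: f a w).
Proof.
move=> H j.
have -> : (fun w => (\sum_a c a *: f a w) ord0 j) = (fun w => \sum_a c a * f a w ord0 j).
  by apply/funext => w; rewrite summxE; apply: eq_bigr => a _; rewrite mxE.
apply: measurable_sum => a.
exact: (measurable_funM (measurable_cst (c a)) (H a j)).
Qed.

Lemma good_sum (I : finType) (c : I -> R) (f : I -> Omega -> 'rV[R]_D) (M : I -> R) :
  (forall a, good (f a) (M a)) ->
  good (fun w => \sum_a c a *: f a w) ((\sum_a `|c a|) * \sum_a `|c a| * M a).
Proof.
move=> H; have Hm a := (H a).1.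
split; first exact: cmeas_sum.
have mS := meas_norm2 (@cmeas_sum I c f Hm).
have mN a := meas_norm2 (Hm a).
apply: (@le_trans _ _ (\int[P]_w ((\sum_a `|c a|) * \sum_a `|c a| * norm2 (f a w))%:E)%E).
  apply: ge0_le_integral => //.
  - by move=> w _; rewrite lee_fin norm2_ge0.
  - exact/measurable_EFinP.
  - apply/measurable_EFinP; apply: measurable_funM; first exact: measurable_cst.
    apply: measurable_sum => a; exact: (measurable_funM (measurable_cst _) (mN a)).
  - by move=> w _; rewrite lee_fin cs_vec.
under eq_integral do rewrite EFinM.
rewrite ge0_integralZl_EFin //; last 3 first.
- by move=> w _; rewrite lee_fin sumr_ge0 // => a _; rewrite mulr_ge0 // norm2_ge0.
- apply/measurable_EFinP; apply: measurable_sum => a.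
  exact: (measurable_funM (measurable_cst _) (mN a)).
- exact: sumr_ge0.
under eq_integral do rewrite -sumEFin.
rewrite ge0_integral_sum //; last 2 first.
- by move=> a; apply/measurable_EFinP; exact: (measurable_funM (measurable_cst _) (mN a)).
- by move=> a w _; rewrite lee_fin mulr_ge0 // norm2_ge0.
rewrite EFinM; apply: lee_wpmul2l; first by rewrite lee_fin sumr_ge0.
rewrite -sumEFin.
apply: lee_sum => a _.
under eq_integral do rewrite EFinM.
rewrite ge0_integralZl_EFin //; last 2 first.
- by move=> w _; rewrite lee_fin norm2_ge0.
- exact/measurable_EFinP.
by rewrite EFinM; apply: lee_wpmul2l => //; exact: (H a).2.
Qed.

Lemma good_le f M M' : good f M -> M <= M' -> good f M'.
Proof. by move=> [h1 h2] hM; split => //; apply: le_trans h2 _; rewrite lee_fin. Qed.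

Lemma good_ext f g M : (forall w, f w = g w) -> good f M -> good g M.
Proof. by move=> e; have -> : f = g by apply/funext. Qed.

Lemma good2 f g (a b M1 M2 : R) : good f M1 -> good g M2 ->
  good (fun w => a *: f w + b *: g w) ((`|a| + `|b|) * (`|a| * M1 + `|b| * M2)).
Proof.
move=> hf hg.
have hx : forall x : bool, good (if x then f else g) (if x then M1 else M2) by case.
have := @good_sum bool (fun x => if x then a else b) (fun x => if x then f else g)
  (fun x => if x then M1 else M2) hx.
by rewrite !big_bool /=; apply: good_ext => w; rewrite big_bool.
Qed.

End Good.

Unset Implicit Arguments. Set Strict Implicit.


Lemma w_loc_eq (R : realType) (D C : nat) p beta E gamma (w0 : 'rV[R]_D)
  (gr : 'I_C -> nat -> nat -> 'rV[R]_D -> 'rV[R]_D) t k i :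
  w_loc p beta E gamma w0 gr t k i =
  start_of p w0 (prev_round p beta E gamma w0 gr t)
  - gamma t *: \sum_(k' < k) gr i t k' (w_til p beta E gamma w0 gr t k' i).
Proof.
elim: k => [|k IH]; first by rewrite big_ord0 scaler0 subr0.
by rewrite big_ord_recr /= scalerDr opprD addrA -IH.
Qed.

Lemma final_eq (R : realType) (D C : nat) p beta E gamma (w0 : 'rV[R]_D)
  (gr : 'I_C -> nat -> nat -> 'rV[R]_D -> 'rV[R]_D) t i :
  final p beta E gamma w0 gr t i = w_loc p beta E gamma w0 gr t E i.
Proof. by case: t. Qed.

Lemma sumZB (R : realType) (D : nat) (I : finType) (a : I -> R) (s : 'rV[R]_D) (g : R)
  (b : I -> 'rV[R]_D) :
  \sum_i a i *: (s - g *: b i) = (\sum_i a i) *: s - g *: \sum_i a i *: b i.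
Proof.
rewrite scaler_suml scaler_sumr -sumrB; apply: eq_bigr => i _.
by rewrite scalerBr !scalerA mulrC.
Qed.

Lemma lin0 (R : realType) (D : nat) (s A X : 'rV[R]_D) (b g : R) :
  (s - g *: X) - (b *: (s - g *: A) + (1 - b) *: s) = (b * g) *: A + (- g) *: X.
Proof. by apply/rowP => j; rewrite !mxE; ring. Qed.

Lemma lin1 (R : realType) (D : nat) (s Y Z A X : 'rV[R]_D) (b g g' : R) :
  ((s - g' *: Y) - g *: X) - (b *: ((s - g' *: Y) - g *: A) + (1 - b) *: (s - g' *: Z))
  = 1 *: ((b * g) *: A + (- g) *: X) + 1 *: (((1 - b) * g') *: Z + (- ((1 - b) * g')) *: Y).
Proof. by apply/rowP => j; rewrite !mxE; ring. Qed.

Lemma fin0 (R : realType) (b g M : R) : 0 < b < 1 -> 0 < g -> 0 <= M ->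
  (`|b * g| + `|- g|) * (`|b * g| * M + `|- g| * M) <= 4 * g ^+ 2 * M * (4 + (1 - b) ^+ 2 + 0).
Proof.
move=> /andP[b0 b1] g0 M0.
rewrite normrN !ger0_norm ?mulr_ge0 ?(ltW b0) ?(ltW g0) //.
have h3 : 0 <= g ^+ 2 * M := mulr_ge0 (sqr_ge0 g) M0.
have h1 : 0 <= g ^+ 2 * M * (1 - b) ^+ 2 := mulr_ge0 h3 (sqr_ge0 (1 - b)).
have hb : 0 <= 1 - b by rewrite subr_ge0 ltW.
have h5 : 0 <= g ^+ 2 * M * (1 - b) := mulr_ge0 h3 hb.
have h4 : 0 <= g ^+ 2 * M * b := mulr_ge0 h3 (ltW b0).
have -> : (b * g + g) * (b * g * M + g * M) = g ^+ 2 * M * (b + 1) ^+ 2 by ring.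
nra.
Qed.

Lemma fin1 (R : realType) (b g g' M : R) : 0 < b < 1 -> 0 < g -> 0 < g' -> 0 <= M ->
  (`|1 : R| + `|1 : R|) * (`|1 : R| * ((`|b * g| + `|- g|) * (`|b * g| * M + `|- g| * M))
     + `|1 : R| * ((`|(1 - b) * g'| + `|- ((1 - b) * g')|) *
                   (`|(1 - b) * g'| * M + `|- ((1 - b) * g')| * M)))
  <= 4 * g ^+ 2 * M * (4 + (1 - b) ^+ 2 + 8 * g' ^+ 2 / g ^+ 2 * (1 - b^-1) ^+ 2).
Proof.
move=> /andP[b0 b1] g0 g'0 M0.
have hb : 0 <= 1 - b by rewrite subr_ge0 ltW.
rewrite !normrN normr1 !ger0_norm ?mulr_ge0 ?(ltW b0) ?(ltW g0) ?(ltW g'0) //.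
have binv : 1 <= b^-1 by rewrite invf_ge1 // ltW.
have q : (1 - b) ^+ 2 <= (1 - b^-1) ^+ 2.
  have -> : (1 - b^-1) ^+ 2 = (1 - b) ^+ 2 * (b^-1) ^+ 2 by field; rewrite gt_eqF.
  have := sqr_ge0 (1 - b).
  have : 1 <= (b^-1) ^+ 2 by apply: exprn_ege1.
  nra.
have -> : 4 * g ^+ 2 * M * (4 + (1 - b) ^+ 2 + 8 * g' ^+ 2 / g ^+ 2 * (1 - b^-1) ^+ 2)
  = 4 * g ^+ 2 * M * (4 + (1 - b) ^+ 2) + 32 * (g' ^+ 2 * M) * (1 - b^-1) ^+ 2.
  by field; rewrite gt_eqF // ?exprn_gt0 // ?expf_neq0 // ?gt_eqF.
have h3 : 0 <= g ^+ 2 * M := mulr_ge0 (sqr_ge0 g) M0.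
have h3' : 0 <= g' ^+ 2 * M := mulr_ge0 (sqr_ge0 g') M0.
have h1 : 0 <= g ^+ 2 * M * (1 - b) ^+ 2 := mulr_ge0 h3 (sqr_ge0 (1 - b)).
have h5 : 0 <= g ^+ 2 * M * (1 - b) := mulr_ge0 h3 hb.
have h4 : 0 <= g ^+ 2 * M * b := mulr_ge0 h3 (ltW b0).
have hq : g' ^+ 2 * M * (1 - b) ^+ 2 <= g' ^+ 2 * M * (1 - b^-1) ^+ 2 by apply: ler_wpM2l.
have -> : (1 + 1) * (1 * ((b * g + g) * (b * g * M + g * M)) +
     1 * (((1 - b) * g' + (1 - b) * g') * ((1 - b) * g' * M + (1 - b) * g' * M)))
   = 2 * (g ^+ 2 * M * (b + 1) ^+ 2) + 8 * (g' ^+ 2 * M * (1 - b) ^+ 2) by ring.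
have h6 : g ^+ 2 * M * (b + 1) ^+ 2 <= g ^+ 2 * M * 4.
  by apply: ler_wpM2l => //; nra.
have h7 : 0 <= g ^+ 2 * M * (1 - b) ^+ 2 := h1.
have h8 : 0 <= g' ^+ 2 * M * (1 - b) ^+ 2 := mulr_ge0 h3' (sqr_ge0 (1 - b)).
have -> : 4 * g ^+ 2 * M * (4 + (1 - b) ^+ 2) = 16 * (g ^+ 2 * M) + 4 * (g ^+ 2 * M * (1 - b) ^+ 2) by ring.
have -> : 32 * (g' ^+ 2 * M) * (1 - b^-1) ^+ 2 = 32 * (g' ^+ 2 * M * (1 - b^-1) ^+ 2) by ring.
rewrite (_ : g ^+ 2 * M * 4 = 4 * (g ^+ 2 * M)) in h6; last by ring.
lra.
Qed.


Theorem lemma7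
  (R : realType) (D C : nat)
  (* probability space carrying the sampling randomness *)
  (d : measure_display) (Omega : measurableType d) (P : probability Omega R)
  (* local objectives and their gradients *)
  (F : 'I_C -> 'rV[R]_D -> R) (gradF : 'I_C -> 'rV[R]_D -> 'rV[R]_D)
  (* similarity weights *)
  (p : 'I_C -> 'I_C -> R)
  (* algorithm parameters *)
  (beta : R) (E : nat) (gamma : nat -> R) (w0 : 'rV[R]_D)
  (* stochastic gradient oracle: sg i t k w omega is the stochastic gradient
     of F_i returned at round t, local step k, when queried at w *)
  (sg : 'I_C -> nat -> nat -> 'rV[R]_D -> Omega -> 'rV[R]_D)
  (sigma G L : R)
  (* weights *)
  (hp_ge0 : forall i n, 0 <= p i n)
  (hp_sym : forall i n, p i n = p n i)
  (hp_diag : forall i, p i i = 0)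
  (hp_sum : \sum_(i < C) \sum_(n < C) p i n = 1)
  (hpi_gt0 : forall i, 0 < pw p i)
  (* parameters *)
  (hbeta : 0 < beta < 1)
  (hE : (1 <= E)%N)
  (hgamma : forall t, 0 < gamma t)
  (* gradients and L-smoothness *)
  (hgrad : forall i x, differentiable (F i) x /\
                       forall v, 'd (F i) x v = dotv (gradF i x) v)
  (hL : forall i x y, enorm (gradF i x - gradF i y) <= L * enorm (x - y))
  (* measurability of the realized stochastic gradients *)
  (hmeas : forall t k i j,
      measurable_fun setT (fun omega : Omega =>
        sg i t k (w_til p beta E gamma w0 (fun i' t' k' w => sg i' t' k' w omega) t k i)
           omega ord0 j))
  (* unbiasedness *)
  (hunb : forall t k i j,
      (\int[P]_omega
        (sg i t k (w_til p beta E gamma w0 (fun i' t' k' w => sg i' t' k' w omega) t k i)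
           omega ord0 j)%:E
       = \int[P]_omega
        (gradF i (w_til p beta E gamma w0 (fun i' t' k' w => sg i' t' k' w omega) t k i)
           ord0 j)%:E)%E)
  (* bounded variance *)
  (hvar : forall t k i,
      (\int[P]_omega
        (norm2 (sg i t k (w_til p beta E gamma w0 (fun i' t' k' w => sg i' t' k' w omega) t k i) omega
                - gradF i (w_til p beta E gamma w0 (fun i' t' k' w => sg i' t' k' w omega) t k i)))%:E
       <= (sigma ^+ 2)%:E)%E)
  (* bounded second moment *)
  (hG : forall t k i,
      (\int[P]_omega
        (norm2 (sg i t k (w_til p beta E gamma w0 (fun i' t' k' w => sg i' t' k' w omega) t k i) omega))%:E
       <= (G ^+ 2)%:E)%E) :
  forall (i : 'I_C) (t k : nat), (k < E)%N ->
    (\int[P]_omega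
      (norm2 (w_bar p beta E gamma w0 (fun i' t' k' w => sg i' t' k' w omega) t k
              - w_til p beta E gamma w0 (fun i' t' k' w => sg i' t' k' w omega) t k i))%:E
     <= (4 * gamma t ^+ 2 * (E%:R) ^+ 2 * G ^+ 2 *
          (4 + (1 - beta) ^+ 2 +
           (if (1 <= t)%N
            then 8 * gamma t.-1 ^+ 2 / gamma t ^+ 2 * (1 - beta^-1) ^+ 2
            else 0)))%:E)%E.
Proof.
move=> i t k hk.
pose gg j t k (w : Omega) := sg j t k (w_til p beta E gamma w0 (fun i' t' k' w' => sg i' t' k' w' w) t k j) w.
pose M := E%:R ^+ 2 * G ^+ 2.
have M0 : 0 <= M by rewrite /M mulr_ge0 // sqr_ge0.
have gG : forall j t k, good P (gg j t k) (G ^+ 2).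
  by move=> j t' k'; split; [move=> jj; exact: hmeas | exact: hG].
have gA : forall j t k, (k <= E)%N -> good P (fun w => \sum_(k' < k) gg j t k' w) M.
  move=> j t' k' hk'.
  have := @good_sum _ _ _ _ P _ (fun _ : 'I_k' => 1) (fun a => gg j t' a) (fun _ => G ^+ 2) (fun a => gG j t' a).
  move/(good_ext (g := fun w => \sum_(k'0 < k') gg j t' k'0 w)).
  move/(_ (fun w => eq_bigr _ (fun a _ => scale1r _))) => h.
  apply: good_le h _.
  rewrite (eq_bigr (fun _ => 1)); last by move=> *; rewrite normr1.
  rewrite sumr_const card_ord.
  rewrite (eq_bigr (fun _ => G ^+ 2)); last by move=> *; rewrite normr1 mul1r.
  rewrite sumr_const card_ord -(mulr_natl (G ^+ 2)) /M.
  rewrite mulrA -expr2; apply: ler_wpM2r; first exact: sqr_ge0.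
  by rewrite lerXn2r ?nnegrE // ler_nat.
have simp1 : forall (I : finType) (c : I -> R), (forall a, 0 <= c a) ->
    \sum_a c a = 1 -> (\sum_a `|c a|) * (\sum_a `|c a| * M) = M.
  move=> I c c0 c1.
  have e1 : \sum_a `|c a| = \sum_a c a by apply: eq_bigr => a _; rewrite ger0_norm.
  have e2 : \sum_a `|c a| * M = \sum_a c a * M by apply: eq_bigr => a _; rewrite ger0_norm.
  by rewrite e1 e2 -mulr_suml c1 !mul1r.
have hpw1 : \sum_j pw p j = 1 := hp_sum.
have pw0 : forall j, 0 <= pw p j by move=> j; exact: ltW.
have gX : forall t k, (k <= E)%N ->
    good P (fun w => \sum_j pw p j *: \sum_(k' < k) gg j t k' w) M.
  move=> t' k' hk'.
  have := @good_sum _ _ _ _ P _ (pw p) (fun j w => \sum_(k'0 < k') gg j t' k'0 w)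
    (fun _ => M) (fun j => gA j t' k' hk').
  by rewrite simp1.
have gZ : forall t, good P (fun w => \sum_n ((pw p i)^-1 * p i n) *: \sum_(k' < E) gg n t k' w) M.
  move=> t'.
  have := @good_sum _ _ _ _ P _ (fun n => (pw p i)^-1 * p i n) (fun j w => \sum_(k'0 < E) gg j t' k'0 w)
    (fun _ => M) (fun j => gA j t' E (leqnn E)).
  rewrite simp1 //.
  - by move=> a; rewrite mulr_ge0 // invr_ge0.
  - by rewrite -mulr_sumr mulVf // gt_eqF.
have hk' : (k <= E)%N := ltnW hk.
pose Gr (w : Omega) := (fun i' t' k' w' => sg i' t' k' w' w).
have wbarE : forall w, w_bar p beta E gamma w0 (Gr w) t k =
    start_of p w0 (prev_round p beta E gamma w0 (Gr w) t)
    - gamma t *: \sum_j pw p j *: \sum_(k' < k) gg j t k' w.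
  move=> w; rewrite /w_bar.
  under eq_bigr do rewrite w_loc_eq.
  by rewrite sumZB hpw1 scale1r.
have wtilE : forall w, w_til p beta E gamma w0 (Gr w) t k i =
    beta *: (start_of p w0 (prev_round p beta E gamma w0 (Gr w) t)
             - gamma t *: \sum_(k' < k) gg i t k' w)
    + (1 - beta) *: u_it p beta E gamma w0 (Gr w) t i.
  by move=> w; rewrite /w_til w_loc_eq.
case: t hk wbarE wtilE => [|t'] hk0 wbarE wtilE.
  have gD := good2 (beta * gamma 0) (- gamma 0) (gA i 0%N k hk') (gX 0%N k hk').
  have Heq : forall w, (beta * gamma 0) *: (\sum_(k' < k) gg i 0%N k' w)
       + (- gamma 0) *: (\sum_j pw p j *: \sum_(k' < k) gg j 0%N k' w)
     = w_bar p beta E gamma w0 (Gr w) 0 k - w_til p beta E gamma w0 (Gr w) 0 k i.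
    by move=> w; rewrite wbarE wtilE; symmetry; apply: lin0.
  apply: le_trans (good_ext Heq gD).2 _.
  rewrite lee_fin /=.
  have -> : 4 * gamma 0%N ^+ 2 * E%:R ^+ 2 * G ^+ 2 = 4 * gamma 0%N ^+ 2 * M by rewrite /M; ring.
  exact: fin0.
have sE : forall w, start_of p w0 (prev_round p beta E gamma w0 (Gr w) t'.+1) =
    start_of p w0 (prev_round p beta E gamma w0 (Gr w) t')
    - gamma t' *: \sum_n pw p n *: \sum_(k' < E) gg n t' k' w.
  move=> w; rewrite /=.
  under eq_bigr do rewrite final_eq w_loc_eq.
  by rewrite sumZB hpw1 scale1r.
have uE : forall w, u_it p beta E gamma w0 (Gr w) t'.+1 i =
    start_of p w0 (prev_round p beta E gamma w0 (Gr w) t')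
    - gamma t' *: \sum_n ((pw p i)^-1 * p i n) *: \sum_(k' < E) gg n t' k' w.
  move=> w; rewrite /u_it /=.
  under eq_bigr do rewrite final_eq w_loc_eq.
  rewrite sumZB scalerBr scalerA mulVf ?gt_eqF // scale1r.
  congr (_ - _); rewrite scalerA mulrC -scalerA scaler_sumr; congr (_ *: _).
  by apply: eq_bigr => n _; rewrite scalerA.
have gD := good2 1 1
  (good2 (beta * gamma t'.+1) (- gamma t'.+1) (gA i t'.+1 k hk') (gX t'.+1 k hk'))
  (good2 ((1 - beta) * gamma t') (- ((1 - beta) * gamma t')) (gZ t') (gX t' E (leqnn E))).
have Heq : forall w,
    1 *: ((beta * gamma t'.+1) *: (\sum_(k' < k) gg i t'.+1 k' w)
       + (- gamma t'.+1) *: (\sum_j pw p j *: \sum_(k' < k) gg j t'.+1 k' w))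
  + 1 *: (((1 - beta) * gamma t') *: (\sum_n ((pw p i)^-1 * p i n) *: \sum_(k' < E) gg n t' k' w)
       + (- ((1 - beta) * gamma t')) *: (\sum_n pw p n *: \sum_(k' < E) gg n t' k' w))
  = w_bar p beta E gamma w0 (Gr w) t'.+1 k - w_til p beta E gamma w0 (Gr w) t'.+1 k i.
  by move=> w; rewrite wbarE wtilE sE uE; symmetry; apply: lin1.
apply: le_trans (good_ext Heq gD).2 _.
rewrite lee_fin /=.
have -> : 4 * gamma t'.+1 ^+ 2 * E%:R ^+ 2 * G ^+ 2 = 4 * gamma t'.+1 ^+ 2 * M by rewrite /M; ring.
exact: fin1.
Qed.
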